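(* Let $f:\mathbb{F}_q^k\to\mathrm{Im}(f)$ and integers $0\le t_d\le t_f$. Then: (i) for any $\{u_1,\dots,u_m\}\subseteq\mathbb{F}_q^k$, $r_f(k,t_d,t_f)\ge N(\mathcal{D}_f(t_d,t_f:u_1,\dots,u_m))$; (ii) if $|\mathrm{Im}(f)|\ge 2$, then $r_f(k,t_d,t_f)\ge 2t_f$; (iii) $r_f(k,t_d,t_f)\ge N(q^k,2t_d+1)-k$, where $N(M,d)$ denotes the minimum length of a $q$-ary code with $M$ codewords and minimum distance at least $d$.
   Context: $d(\cdot,\cdot)$ is Hamming distance. For $f:\mathbb{F}_q^k\to\mathrm{Im}(f)$ and integers $0\le d_d\le d_f$, an $(f\!:d_d,d_f)$-FCC with redundancy $r$ is a systematic encoding $\mathfrak{C}_f(u)=(u,p_u)\in\mathbb{F}_q^{k+r}$ with $d(\mathfrak{C}_f(u_1),\mathfrak{C}_f(u_2))\ge d_d$ whenever $u_1\ne u_2$ and $\ge d_f$ whenever $f(u_1)\ne f(u_2)$. $r_f(k,t_d,t_f)$ is the minimum $r$ for which an $(f\!:2t_d+1,2t_f+1)$-FCC with redundancy $r$ exists. $\mathcal{D}_f(t_d,t_f:u_1,\dots,u_M)$ is the $M\times M$ matrix with $(i,j)$ entry $\max(2t_d+1-d(u_i,u_j),0)$ if $u_i\ne u_j$ and $f(u_i)=f(u_j)$; $\max(2t_f+1-d(u_i,u_j),0)$ if $f(u_i)\ne f(u_j)$; $0$ otherwise. For a nonnegative integer matrix $\mathcal{D}$, $N(\mathcal{D})$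 is the least $r$ such that there are $p_1,\dots,p_M\in\mathbb{F}_q^r$ with $d(p_i,p_j)\ge[\mathcal{D}]_{i,j}$ for all $i,j$. *)

(* Defs.v *)
From Stdlib Require Import ClassicalEpsilon.
From mathcomp Require Import all_boot all_order all_algebra.
Set Implicit Arguments. Unset Strict Implicit. Unset Printing Implicit Defensive.

Section FCC.
Variable F : finFieldType.

Definition hamming (n : nat) (x y : 'rV[F]_n) : nat :=
  #|[pred i : 'I_n | x ord0 i != y ord0 i]|.

(* least natural number satisfying P (chosen by epsilon; it is the true
   minimum whenever some natural satisfies P) *)
Definition min_nat (P : nat -> Prop) : nat :=
  epsilon (inhabits 0%N) (fun r => P r /\ forall r', P r' -> (r <= r')%N).

(* (f : dd, df)-FCC with redundancy r: systematic encoding u |-> (u, p u) *)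
Definition is_FCC (k : nat) (Y : eqType) (f : 'rV[F]_k -> Y)
    (dd df r : nat) (p : 'rV[F]_k -> 'rV[F]_r) : Prop :=
  forall u1 u2 : 'rV[F]_k,
    (u1 != u2 -> (dd <= hamming (row_mx u1 (p u1)) (row_mx u2 (p u2)))%N) /\
    (f u1 != f u2 -> (df <= hamming (row_mx u1 (p u1)) (row_mx u2 (p u2)))%N).

Definition r_f (k : nat) (Y : eqType) (f : 'rV[F]_k -> Y) (td tf : nat) : nat :=
  min_nat (fun r => exists p : 'rV[F]_k -> 'rV[F]_r,
                      is_FCC f td.*2.+1 tf.*2.+1 p).

Definition N_mx (M : nat) (D : 'M[nat]_M) : nat :=
  min_nat (fun r => exists p : 'I_M -> 'rV[F]_r,
                      forall i j, (D i j <= hamming (p i) (p j))%N).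

Definition D_f (k : nat) (Y : eqType) (f : 'rV[F]_k -> Y) (td tf m : nat)
    (u : 'I_m -> 'rV[F]_k) : 'M[nat]_m :=
  \matrix_(i < m, j < m)
    if (u i != u j) && (f (u i) == f (u j)) then (td.*2.+1 - hamming (u i) (u j))%N
    else if f (u i) != f (u j) then (tf.*2.+1 - hamming (u i) (u j))%N
    else 0%N.

Definition N_code (M d : nat) : nat :=
  min_nat (fun n => exists c : 'I_M -> 'rV[F]_n,
                      forall i j, i != j -> (d <= hamming (c i) (c j))%N).

End FCC.

(* Main.v *)
Require Import Defs.
From mathcomp Require Import all_boot all_order all_algebra.
From Stdlib Require Import Classical ClassicalEpsilon.

Lemma min_nat_spec (P : nat -> Prop) r : P r ->
  P (min_nat P) /\ (min_nat P <= r)%N.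
Proof.
move=> Pr.
have ex : exists m, P m /\ forall r', P r' -> (m <= r')%N.
  elim/ltn_ind: r Pr => n IH Pn.
  case: (classic (exists r', (r' < n)%N /\ P r')) => [[r' [lt Pr']]|H].
    exact: IH lt Pr'.
  exists n; split=> // r' Pr'; rewrite leqNgt; apply/negP => lt.
  by apply: H; exists r'.
have [Pm Hm] := epsilon_spec (inhabits 0%N) _ ex.
by split => //; apply: Hm.
Qed.

Lemma hamming_row (F : finFieldType) m n (a c : 'rV[F]_m) (b d : 'rV[F]_n) :
  hamming (row_mx a b) (row_mx c d) = (hamming a c + hamming b d)%N.
Proof.
rewrite /hamming -!sum1_card big_split_ord /=.
congr (_ + _)%N; apply: eq_bigl => i; rewrite !inE; by rewrite ?row_mxEl ?row_mxEr.
Qed.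

Lemma hamming_le (F : finFieldType) n (a b : 'rV[F]_n) : (hamming a b <= n)%N.
Proof. by rewrite /hamming; apply: leq_trans (max_card _) _; rewrite card_ord. Qed.

Lemma FCC_exists (F : finFieldType) (k : nat) (Y : eqType)
    (f : 'rV[F]_k -> Y) (td tf : nat) (htd : (td <= tf)%N) :
  exists r, exists p : 'rV[F]_k -> 'rV[F]_r, is_FCC f td.*2.+1 tf.*2.+1 p.
Proof.
pose p (u : 'rV[F]_k) : 'rV[F]_(tf.*2.+1 * k) :=
  mxvec (\matrix_(i < tf.*2.+1, j < k) u ord0 j).
have key : forall u1 u2, u1 != u2 ->
    (tf.*2.+1 <= hamming (row_mx u1 (p u1)) (row_mx u2 (p u2)))%N.
  move=> u1 u2 ne.
  have [j0 Hj0] : exists j, u1 ord0 j != u2 ord0 j.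
    apply/existsP; apply: contraR ne => /existsPn H.
    apply/eqP/rowP => j; apply/eqP; move: (H j); by rewrite negbK.
  rewrite hamming_row; apply: leq_trans (leq_addl _ _).
  have inj : injective (fun i : 'I_(tf.*2.+1) => mxvec_index i j0).
    by move=> a b /= /cast_ord_inj /enum_rank_inj [].
  rewrite -{1}(card_ord tf.*2.+1) -(card_imset predT inj) /hamming.
  apply: subset_leq_card; apply/subsetP => x /imsetP [i _ ->].
  by rewrite inE /p !mxvecE !mxE.
exists (tf.*2.+1 * k)%N, p => u1 u2; split => H.
  case/boolP: (u1 == u2) H => [/eqP -> //|ne _].
  apply: leq_trans (key _ _ ne); by rewrite ltnS leq_double.
apply: key; apply: contraNneq H => ->; by [].
Qed.

Lemma step_exists (Y : eqType) (g : nat -> Y) n :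
  g 0%N != g n -> exists j, (j < n)%N /\ g j != g j.+1.
Proof.
elim: n => [|n IH]; first by rewrite eqxx.
move=> H; case/boolP: (g n == g n.+1) => [/eqP E|ne].
  have [j [lt Hj]] := IH (ltac:(by rewrite E)).

  by exists j; split => //; apply: ltnW.
by exists n.
Qed.

Theorem theorem4 (F : finFieldType) (k : nat) (Y : eqType)
    (f : 'rV[F]_k -> Y) (td tf : nat) (htd : (td <= tf)%N) :
  (forall (m : nat) (u : 'I_m -> 'rV[F]_k),
      (N_mx F (D_f f td tf u) <= r_f f td tf)%N) /\
  ((2 <= size (undup (codom f)))%N -> (tf.*2 <= r_f f td tf)%N) /\
  (N_code F (#|F| ^ k) td.*2.+1 - k <= r_f f td tf)%N.
Proof.
have [r0 Hr0] := @FCC_exists F k Y f td tf htd.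
have [p Hp] : exists p : 'rV[F]_k -> 'rV[F]_(r_f f td tf), is_FCC f td.*2.+1 tf.*2.+1 p.
  exact: (proj1 (@min_nat_spec (fun r => exists p : 'rV[F]_k -> 'rV[F]_r,
                      is_FCC f td.*2.+1 tf.*2.+1 p) _ Hr0)).
move: (r_f f td tf) p Hp => r p Hp.
split.
  move=> m u.
  have := (@min_nat_spec (fun r => exists p : 'I_m -> 'rV[F]_r,
                      forall i j, (D_f f td tf u i j <= hamming (p i) (p j))%N) r).
  case; last by [].
  exists (fun i => p (u i)) => i j; rewrite /D_f mxE.
  have [H1 H2] := Hp (u i) (u j); rewrite hamming_row in H1 H2.
  case: ifP => [/andP [ne _]|_]; first by rewrite leq_subLR (H1 ne).
  case: ifP => [ne|_]; first by rewrite leq_subLR (H2 ne).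
  by [].
split.
  move=> H2.
  have [u1 [u2 ne]] : exists u1 u2, f u1 != f u2.
    case E: (undup (codom f)) H2 => [|a [|b s]] //= _.
    have : a \in codom f by rewrite -mem_undup E inE eqxx.
    have : b \in codom f by rewrite -mem_undup E !inE eqxx orbT.
    move=> /codomP [x2 Eb] /codomP [x1 Ea]; exists x1, x2.
    have := undup_uniq (codom f); rewrite E /= inE negb_or => /andP [/andP [nab _] _].
    by rewrite -Ea -Eb.
  pose w (j : nat) : 'rV[F]_k := (\row_(i < k) if (i < j)%N then u2 ord0 i else u1 ord0 i)%R.
  have w0 : w 0%N = u1 by apply/rowP => i; rewrite mxE.
  have wk : w k = u2 by apply/rowP => i; rewrite mxE ltn_ord.
  have [j [_ Hj]] := @step_exists Y (fun j => f (w j)) k (ltac:(by rewrite /= w0 wk)).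
  have [_ H] := Hp (w j) (w j.+1); move: (H Hj); rewrite hamming_row => Hl.
  have h1 : (hamming (w j) (w j.+1) <= 1)%N.
    rewrite /hamming.
    case: (ltnP j k) => [ltj|lej].
      apply: leq_trans (_ : #|pred1 (Ordinal ltj)| <= _)%N; last by rewrite card1.
      apply: subset_leq_card; apply/subsetP => i; rewrite !inE !mxE ltnS.
      case: (ltngtP i j) => E.
      - by rewrite eqxx.
      - by rewrite eqxx.
      - by move=> _; apply/eqP/val_inj.
    apply: leq_trans (_ : #|pred0| <= _)%N; last by rewrite card0.
    apply: subset_leq_card; apply/subsetP => i; rewrite !inE !mxE ltnS.
    by rewrite (leq_trans (ltn_ord i) lej) (ltnW (leq_trans (ltn_ord i) lej)) eqxx.
  have hr := @hamming_le F r (p (w j)) (p (w j.+1)).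
  by have := leq_trans Hl (leq_add h1 hr); rewrite add1n ltnS.
have cardE : #|{: 'rV[F]_k}| = (#|F| ^ k)%N by rewrite card_mx mul1n.
pose e (i : 'I_(#|F| ^ k)) : 'rV[F]_k := enum_val (cast_ord (esym cardE) i).
have einj : injective e.
  by move=> a b /enum_val_inj /cast_ord_inj.
have := (@min_nat_spec (fun n => exists c : 'I_(#|F| ^ k) -> 'rV[F]_n,
            forall i j, i != j -> (td.*2.+1 <= hamming (c i) (c j))%N) (k + r)).
case; last by rewrite leq_subLR.
exists (fun i => row_mx (e i) (p (e i))) => i j ne.
have [H _] := Hp (e i) (e j); apply: H.
apply: contraNneq ne => E; apply/eqP; exact: (einj _ _ E).
Qed.
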